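(* Consider the Axelrod model with $F$ features and $q\ge2$ states on the path with vertex set $\{0,1,\dots,N\}$, started with all initial features i.i.d. uniform on $\{1,\dots,q\}$, and fix a time $t\ge0$. Let $0\le x<y<z\le N$ and $i\in\{1,\dots,F\}$, and for vertices $u,v$ let $\Omega_i(u,v)=\{X_t^i(u)=X_t^i(v)\}$. Then $$P\big(\Omega_i(x,z)\ \big|\ (\Omega_i(x,y)\cup\Omega_i(y,z))^c\big)=\frac{1}{q-1}.$$
   Context: Axelrod model with $F$ features and $q$ states on a graph: process $X_t:V\to\{1,\dots,q\}^F$, $X_t(x)=(X_t^1(x),\dots,X_t^F(x))$; for each ordered pair $(x,y)$ of adjacent vertices with $X(x)\ne X(y)$, at rate $F(x,y)/2$, where $F(x,y)=\frac1F\sum_i\mathbf 1\{X^i(x)=X^i(y)\}$, vertex $x$ copies from $y$ one feature chosen uniformly among those on which they differ. *)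

(* Defs.v *)
From mathcomp Require Import all_boot.
From Stdlib Require Import Reals.
Set Implicit Arguments. Unset Strict Implicit. Unset Printing Implicit Defensive.

Definition Rsum (T : finType) (f : T -> R) : R := \big[Rplus/0%R]_(s : T) f s.

Section Axelrod.
Variables (F q N : nat).

(* Vertices of the path {0,...,N}; features 'I_F; states 'I_q
   (state k+1 of the paper is encoded as k : 'I_q). *)
Definition vertex := 'I_N.+1.
Definition feature := 'I_F.
Definition config := {ffun vertex * feature -> 'I_q}.

Definition adj (x y : vertex) : bool := (x.+1 == y :> nat) || (y.+1 == x :> nat).

Definition nagree (s : config) (x y : vertex) : nat :=
  #|[pred j : feature | s (x, j) == s (y, j)]|.
Definition ndiff (s : config) (x y : vertex) : nat :=
  #|[pred j : feature | s (x, j) != s (y, j)]|.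

Definition upd (s : config) (x : vertex) (j : feature) (v : 'I_q) : config :=
  [ffun p => if (p.1 == x) && (p.2 == j) then v else s p].

(* Jump rate from s to s': for each ordered adjacent pair (x,y), at rate
   F(x,y)/2 (F(x,y) = nagree/F), x copies from y a uniformly chosen
   differing feature. *)
Definition rate (s s' : config) : R :=
  Rsum (fun xy : vertex * vertex =>
    if adj xy.1 xy.2 then
      Rsum (fun j : feature =>
        if (s (xy.1, j) != s (xy.2, j)) && (s' == upd s xy.1 j (s (xy.2, j)))
        then (INR (nagree s xy.1 xy.2) / INR F / 2 / INR (ndiff s xy.1 xy.2))%R
        else 0%R)
    else 0%R).

Definition gen (s s' : config) : R :=
  if s == s' then (- Rsum (fun r : config => if r == s then 0%R else rate s r))%R
  else rate s s'.

(* p s c = P(X_s = c): the law of the chain, characterized by the initial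
   i.i.d. uniform law and the Kolmogorov forward equation. *)
Definition is_law (p : R -> config -> R) : Prop :=
  (forall c, p 0%R c = (/ (INR q ^ (F * N.+1)))%R) /\
  (forall (s : R) (c : config),
      derivable_pt_lim (fun u => p u c) s (Rsum (fun r => p s r * gen r c))%R).

Definition prob (p : R -> config -> R) (t : R) (A : pred config) : R :=
  Rsum (fun c => if A c then p t c else 0%R).

Definition cond_prob (p : R -> config -> R) (t : R) (A B : pred config) : R :=
  (prob p t (predI A B) / prob p t B)%R.

Definition Omega (i : feature) (u v : vertex) : pred config :=
  fun c => c (u, i) == c (v, i).

End Axelrod.

(* Main.v *)
Require Import Defs.
From mathcomp Require Import all_boot all_fingroup.
From Stdlib Require Import Reals Lra Lia.
From HB Require Import structures.
Set Implicit Arguments. Unset Strict Implicit. Unset Printing Implicit Defensive.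
Set Warnings "-notation-overridden,-redundant-canonical-projection".

HB.instance Definition _ := Monoid.isComLaw.Build R 0%R Rplus
  (fun a b c => esym (Rplus_assoc a b c)) Rplus_comm Rplus_0_l.

Section Helpers12.



Open Scope R_scope.

Section RsumL.
Variable T : finType.

Lemma Rsum_ext (f g : T -> R) : (forall s, f s = g s) -> Rsum f = Rsum g.
Proof. by move=> H; apply: eq_bigr => s _; apply: H. Qed.

Lemma Rsum_add (f g : T -> R) : Rsum (fun s => f s + g s) = Rsum f + Rsum g.
Proof. exact: big_split. Qed.

Lemma Rsum_scal (a : R) (f : T -> R) : Rsum (fun s => a * f s) = a * Rsum f.
Proof.
rewrite /Rsum; elim: (index_enum T) => [|h l IH]; rewrite ?big_nil ?big_cons; first ring.
by rewrite IH; ring.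
Qed.

Lemma Rsum_le (f g : T -> R) : (forall s, f s <= g s) -> Rsum f <= Rsum g.
Proof.
move=> H; rewrite /Rsum; elim: (index_enum T) => [|h l IH]; rewrite ?big_nil ?big_cons; first lra.
by have := H h; lra.
Qed.

Lemma Rsum_nonneg (f : T -> R) : (forall s, 0 <= f s) -> 0 <= Rsum f.
Proof.
move=> H; have -> : 0 = Rsum (fun _ : T => 0) by rewrite /Rsum big1.
exact: Rsum_le.
Qed.

Lemma Rsum_zero : Rsum (fun _ : T => 0) = 0.
Proof. by rewrite /Rsum big1. Qed.

Lemma Rsum_D1 (f : T -> R) s0 : Rsum f = f s0 + Rsum (fun s => if s == s0 then 0 else f s).
Proof.
rewrite /Rsum (bigD1 s0) //=; congr (_ + _).
rewrite [RHS](bigD1 s0) //= eqxx Rplus_0_l; apply: eq_bigr => s /negbTE ->; done.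
Qed.

Lemma Rsum_term_le (f : T -> R) s0 : (forall s, 0 <= f s) -> f s0 <= Rsum f.
Proof.
move=> H; rewrite (Rsum_D1 f s0).
have : 0 <= Rsum (fun s => if s == s0 then 0 else f s).
  by apply: Rsum_nonneg => s; case: (s == s0) => //; lra.
lra.
Qed.

Lemma Rsum_pred1 (f : T -> R) s0 : Rsum (fun s => if s == s0 then f s else 0) = f s0.
Proof.
rewrite (Rsum_D1 _ s0) eqxx.
rewrite (Rsum_ext (g := fun _ => 0)) ?Rsum_zero; first ring.
by move=> s; case: (s == s0).
Qed.

Lemma Rsum_const (a : R) : Rsum (fun _ : T => a) = INR #|T| * a.
Proof.
rewrite /Rsum big_const; elim: #|_| => [|n IH] /=; first ring.
rewrite IH; case: n {IH} => [|n] /=; ring.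
Qed.

Lemma Rsum_reindex (h : T -> T) (f : T -> R) : injective h -> Rsum f = Rsum (fun s => f (h s)).
Proof. by move=> Hh; rewrite /Rsum (reindex_inj Hh). Qed.

Lemma dRsum_list (l : seq T) (f : T -> R -> R) (f' : T -> R) s :
  (forall c, derivable_pt_lim (f c) s (f' c)) ->
  derivable_pt_lim (fun u => \big[Rplus/0]_(c <- l) f c u) s (\big[Rplus/0]_(c <- l) f' c).
Proof.
move=> H; elim: l => [|h l IH].
  rewrite big_nil.
  have -> : (fun u => \big[Rplus/0]_(c <- [::]) f c u) = fun _ => 0.
    by apply: FunctionalExtensionality.functional_extensionality => u; rewrite big_nil.
  exact: derivable_pt_lim_const.
rewrite big_cons.
have -> : (fun u => \big[Rplus/0]_(c <- h :: l) f c u) =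
          (fun u => f h u + \big[Rplus/0]_(c <- l) f c u).
  by apply: FunctionalExtensionality.functional_extensionality => u; rewrite big_cons.
exact: derivable_pt_lim_plus.
Qed.

Lemma dRsum (f : T -> R -> R) (f' : T -> R) s :
  (forall c, derivable_pt_lim (f c) s (f' c)) ->
  derivable_pt_lim (fun u => Rsum (fun c => f c u)) s (Rsum f').
Proof. exact: dRsum_list. Qed.

End RsumL.

Lemma Rsum_swap (T U : finType) (f : T -> U -> R) :
  Rsum (fun a => Rsum (fun b => f a b)) = Rsum (fun b => Rsum (fun a => f a b)).
Proof. exact: exchange_big. Qed.

Open Scope R_scope.

Lemma mono0 (f f' : R -> R) t :
  (forall s, derivable_pt_lim f s (f' s)) -> (forall s, 0 <= s -> 0 <= f' s) ->
  0 <= t -> f 0 <= f t.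
Proof.
move=> Hd Hp Ht; case: (Req_dec t 0) => [->|Hn]; first lra.
have [c [Hc1 Hc2]] : exists c, f t - f 0 = f' c * (t - 0) /\ 0 < c < t.
  apply: MVT_cor2; first lra. by move=> c _; apply: Hd.
have := Hp c ltac:(lra). have : 0 <= t - 0 by lra. move=> H1 H2.
have := Rmult_le_pos _ _ H2 H1. lra.
Qed.

Lemma gronwall (E E' : R -> R) (C : R) t :
  (forall s, derivable_pt_lim E s (E' s)) -> (forall s, 0 <= s -> E' s <= C * E s) ->
  E 0 = 0 -> (forall s, 0 <= s -> 0 <= E s) -> 0 <= t -> E t = 0.
Proof.
move=> Hd Hb H0 Hnn Ht.
pose g := fun s => - (E s * exp (- (C * s))).
pose g' := fun s => - (E' s * exp (- (C * s)) + E s * (exp (- (C * s)) * (- (C * 1)))).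
have Hg : forall s, derivable_pt_lim g s (g' s).
  move=> s; apply: derivable_pt_lim_opp; apply: derivable_pt_lim_mult; first exact: Hd.
  have -> : (fun s => exp (- (C * s))) = comp exp (fun s => - (C * s)) by [].
  apply: derivable_pt_lim_comp; last exact: derivable_pt_lim_exp.
  apply: derivable_pt_lim_opp; apply: derivable_pt_lim_scal; exact: derivable_pt_lim_id.
have := @mono0 g g' t Hg.
have Hpos : forall s, 0 <= s -> 0 <= g' s.
  move=> s Hs; rewrite /g'; have := Hb s Hs; have := exp_pos (- (C * s)).
  move=> He Hb'. have : 0 <= (C * E s - E' s) * exp (- (C * s)).
    apply: Rmult_le_pos; lra.
  nra.
move/(_ Hpos Ht); rewrite /g H0 Rmult_0_l.
have := exp_pos (- (C * t)); have := Hnn t Ht. move=> H1 H2 H3.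
have : E t * exp (- (C * t)) = 0 by nra.
case/Rmult_integral => //; lra.
Qed.

Lemma dnegsq x : derivable_pt_lim (fun u => Rmin u 0 * Rmin u 0) x (2 * Rmin x 0).
Proof.
move=> eps Heps.
exists (mkposreal _ Heps) => h Hh0 /= Hh.
have Hb : forall a b, Rabs (Rmin a 0 * Rmin a 0 - Rmin b 0 * Rmin b 0 - 2 * Rmin b 0 * (a - b)) <= (a - b) * (a - b).
  move=> a b; rewrite /Rmin; case: Rle_dec => Ha; case: Rle_dec => Hb';
  try (have := Rnot_le_lt _ _ Ha); try (have := Rnot_le_lt _ _ Hb'); intros;
  have Hs := Rle_0_sqr (a - b); rewrite /Rsqr in Hs;
  apply: Rabs_le; split; nra.
have := Hb (x + h) x.
have -> : x + h - x = h by ring.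
move=> H.
have Hh' : h <> 0 := Hh0.
rewrite /Rdiv.
have -> : (Rmin (x + h) 0 * Rmin (x + h) 0 - Rmin x 0 * Rmin x 0) * / h - 2 * Rmin x 0 =
          (Rmin (x + h) 0 * Rmin (x + h) 0 - Rmin x 0 * Rmin x 0 - 2 * Rmin x 0 * h) * / h
  by field.
rewrite Rabs_mult Rabs_inv.
have Hah : 0 < Rabs h by apply: Rabs_pos_lt.
apply: (Rle_lt_trans _ (Rabs h)); last done.
apply: (Rmult_le_reg_r (Rabs h)) => //.
rewrite Rmult_assoc Rinv_l; last lra.
rewrite Rmult_1_r; apply: (Rle_trans _ _ _ H).
rewrite -Rabs_mult; rewrite Rabs_right; first lra. nra.
Qed.

End Helpers12.

Lemma perm_ext (T U : finType) (s : seq U) (f g : U -> T) :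
  {in s &, forall n m, (f n == f m) = (g n == g m)} ->
  exists sg : {perm T}, {in s, forall n, sg (f n) = g n}.
Proof.
elim: s => [|a s IH] H; first by exists 1%g.
have [sg Hsg] : exists sg : {perm T}, {in s, forall n, sg (f n) = g n}.
  by apply: IH => n m Hn Hm; apply: H; rewrite inE ?Hn ?Hm orbT.
exists (sg * tperm (sg (f a)) (g a))%g => n; rewrite inE => /orP [/eqP ->|Hn].
  by rewrite permM tpermL.
rewrite permM (Hsg n Hn).
have Hna := H n a; rewrite !inE eqxx Hn orbT /= in Hna; have {}Hna := Hna isT isT.
case: (eqVneq (g n) (g a)) => Hg.
  move: Hna; rewrite Hg eqxx => /eqP Hf.
  by rewrite -Hf (Hsg n Hn) Hg tperm1 perm1.
apply: tpermD; last by rewrite eq_sym.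
apply/eqP => E.
have E2 : sg (f a) = sg (f n) by rewrite E (Hsg n Hn).
have E3 := perm_inj E2.
by move: Hg; rewrite -Hna E3 eqxx.
Qed.

Section Ax.
Variables (F q N : nat) (i : feature F).
Local Notation config := (config F q N).
Local Notation vertex := (vertex N).

Lemma upd_at (s : config) x j v : upd s x j v (x, j) = v.
Proof. by rewrite /upd ffunE /= !eqxx. Qed.

Lemma upd_oth (s : config) x j v a k : (a != x) || (k != j) -> upd s x j v (a, k) = s (a, k).
Proof. by rewrite /upd ffunE /= => /orP [/negbTE->|/negbTE->]; rewrite ?andbF. Qed.

Lemma upd_upd (s : config) x j v w : upd (upd s x j v) x j w = upd s x j w.
Proof.
apply/ffunP => [[a k]]; rewrite /upd !ffunE /=.
by case: ((a == x) && (k == j)).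
Qed.

Lemma upd_id (s : config) x j : upd s x j (s (x, j)) = s.
Proof.
apply/ffunP => [[a k]]; rewrite /upd !ffunE /=.
by case: andP => // [[/eqP -> /eqP ->]].
Qed.

Definition sim (c c' : config) : bool :=
  [forall pr : vertex * feature F, (pr.2 != i) ==> (c pr == c' pr)] &&
  [forall v : vertex, forall w : vertex,
     adj v w ==> ((c (v, i) == c (w, i)) == (c' (v, i) == c' (w, i)))].

Lemma simP (c c' : config) :
  reflect ((forall a k, k != i -> c (a, k) = c' (a, k)) /\
           (forall v w, adj v w -> (c (v, i) == c (w, i)) = (c' (v, i) == c' (w, i))))
          (sim c c').
Proof.
apply: (iffP andP) => [[/forallP H1 /forallP H2]|[H1 H2]]; split.
- by move=> a k Hk; have := H1 (a, k); rewrite /= Hk => /eqP.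
- by move=> v w Hvw; have /forallP/(_ w) := H2 v; rewrite Hvw => /eqP.
- by apply/forallP => [[a k]]; apply/implyP => /= Hk; rewrite H1.
- by apply/forallP => v; apply/forallP => w; apply/implyP => Hvw; rewrite H2.
Qed.

Lemma sim_refl c : sim c c.
Proof. by apply/simP. Qed.

Lemma sim_sym c c' : sim c c' -> sim c' c.
Proof.
move/simP => [H1 H2]; apply/simP; split.
  by move=> a k Hk; rewrite H1.
by move=> v w Hvw; rewrite H2.
Qed.

Lemma sim_trans c1 c2 c3 : sim c1 c2 -> sim c2 c3 -> sim c1 c3.
Proof.
move/simP => [H1 H2] /simP [H3 H4]; apply/simP; split.
  by move=> a k Hk; rewrite H1 ?H3.
by move=> v w Hvw; rewrite H2 ?H4.
Qed.

Lemma adj_sym (v w : vertex) : adj v w = adj w v.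
Proof. by rewrite /adj orbC. Qed.

Lemma adj_neq (v w : vertex) : adj v w -> v != w.
Proof.
rewrite /adj => /orP [] /eqP H; apply/eqP => E; move: H; rewrite E => H; lia.
Qed.

Lemma sim_feat c c' v w j : sim c c' -> adj v w ->
  (c (v, j) == c (w, j)) = (c' (v, j) == c' (w, j)).
Proof.
move/simP => [H1 H2] Hvw; case: (eqVneq j i) => [->|Hj]; first exact: H2.
by rewrite !H1.
Qed.

Lemma sim_nagree c c' v w : sim c c' -> adj v w -> nagree c v w = nagree c' v w.
Proof. move=> H Hvw; apply: eq_card => j /=; exact: sim_feat. Qed.

Lemma sim_ndiff c c' v w : sim c c' -> adj v w -> ndiff c v w = ndiff c' v w.
Proof. move=> H Hvw; apply: eq_card => j /=; rewrite !inE /=; congr negb; exact: sim_feat. Qed.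


Open Scope R_scope.

Definition wt (s : config) (x y : vertex) : R :=
  INR (nagree s x y) / INR F / 2 / INR (ndiff s x y).

Lemma rateE (s s' : config) : rate s s' =
  Rsum (fun xy : vertex * vertex => if adj xy.1 xy.2 then
     Rsum (fun j : feature F => if (s (xy.1, j) != s (xy.2, j)) && (s' == upd s xy.1 j (s (xy.2, j)))
        then wt s xy.1 xy.2 else 0) else 0).
Proof. by []. Qed.

Lemma Rinv_nn x : 0 <= x -> 0 <= / x.
Proof.
move=> H; case: (Req_dec x 0) => [->|Hn]; first by rewrite Rinv_0; lra.
apply: Rlt_le; apply: Rinv_0_lt_compat; lra.
Qed.

Lemma wt_nn s x y : 0 <= wt s x y.
Proof.
rewrite /wt /Rdiv; repeat apply: Rmult_le_pos; try apply: Rinv_nn; try apply: pos_INR; lra.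
Qed.

Lemma rate_nn (s s' : config) : 0 <= rate s s'.
Proof.
apply: Rsum_nonneg => xy; case: ifP => _; last lra.
apply: Rsum_nonneg => j; case: ifP => _; [exact: wt_nn| lra].
Qed.

Lemma rate_self (s : config) : rate s s = 0.
Proof.
rewrite rateE (Rsum_ext (g := fun _ => 0)) ?Rsum_zero // => xy.
case: ifP => // Hadj; rewrite (Rsum_ext (g := fun _ => 0)) ?Rsum_zero // => j.
case: ifP => //; move/andP => [Hne /eqP E]; exfalso.
have := congr1 (fun f : config => f (xy.1, j)) E; rewrite /= upd_at => H.
by rewrite -H eqxx in Hne.
Qed.


Lemma Rsum_if (T : finType) (b : bool) (f : T -> R) :
  Rsum (fun r => if b then f r else 0) = if b then Rsum f else 0.
Proof. by case: b => //; rewrite Rsum_zero. Qed.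

Definition exitr (c : config) : R := Rsum (fun r => if r == c then 0 else rate c r).

Lemma genE (r c : config) : gen r c = (if r == c then - exitr c else 0) + rate r c.
Proof.
rewrite /gen /exitr; case: eqP => [->|_]; last by rewrite Rplus_0_l.
by rewrite rate_self Rplus_0_r.
Qed.

Lemma exitrE (c : config) : exitr c =
  Rsum (fun xy : vertex * vertex => if adj xy.1 xy.2 then
     Rsum (fun j : feature F => if c (xy.1, j) != c (xy.2, j) then wt c xy.1 xy.2 else 0) else 0).
Proof.
rewrite /exitr (Rsum_ext (g := fun r => rate c r)); last first.
  by move=> r; case: eqP => // ->; rewrite rate_self.
rewrite /rate Rsum_swap; apply: Rsum_ext => xy.
rewrite Rsum_if; case: ifP => // _.
rewrite Rsum_swap; apply: Rsum_ext => j.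
rewrite (Rsum_ext (g := fun r => if r == upd c xy.1 j (c (xy.2, j)) then
          (if c (xy.1, j) != c (xy.2, j) then wt c xy.1 xy.2 else 0) else 0)).
  by rewrite Rsum_pred1.
by move=> r; case: (c (xy.1, j) != c (xy.2, j)); case: (r == _).
Qed.

Lemma exitr_sim (c c' : config) : sim c c' -> exitr c = exitr c'.
Proof.
move=> H; rewrite !exitrE; apply: Rsum_ext => xy; case: ifP => // Hadj.
apply: Rsum_ext => j; rewrite (sim_feat j H Hadj).
by rewrite /wt (sim_nagree H Hadj) (sim_ndiff H Hadj).
Qed.


Lemma upd_eq_self (c : config) x j w : (c == upd c x j w) = (c (x, j) == w).
Proof.
apply/eqP/eqP => [E|<-]; last by rewrite upd_id.
by have := congr1 (fun f : config => f (x, j)) E; rewrite /= upd_at.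
Qed.

Lemma Lconv (c : config) (x y : vertex) (j : feature F) (G : config -> R) : x != y ->
  Rsum (fun r : config => if (r (x, j) != r (y, j)) && (c == upd r x j (r (y, j))) then G r else 0)
  = Rsum (fun v : 'I_q => if (v != c (y, j)) && (c (x, j) == c (y, j)) then G (upd c x j v) else 0).
Proof.
move=> Hxy.
have Hy : forall (s : config) v, upd s x j v (y, j) = s (y, j).
  by move=> s v; apply: upd_oth; rewrite eq_sym Hxy.
pose K := fun v : 'I_q => if (v != c (y, j)) && (c (x, j) == c (y, j)) then G (upd c x j v) else 0.
rewrite (Rsum_ext (g := fun r : config => Rsum (fun v => if r == upd c x j v then K v else 0))).
  rewrite Rsum_swap; apply: Rsum_ext => v; exact: (Rsum_pred1 (fun _ => K v)).
move=> r; rewrite (Rsum_D1 _ (r (x, j))).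
rewrite (Rsum_ext (f := fun v => if v == r (x, j) then 0 else _) (g := fun _ => 0)); last first.
  move=> v; case: eqP => // Hv; case: eqP => // E; exfalso; apply: Hv.
  by rewrite E upd_at.
rewrite Rsum_zero Rplus_0_r /K.
case: (eqVneq r (upd c x j (r (x, j)))) => E.
  move: E; move: (r (x, j)) => v0 E; subst r.
  by rewrite !Hy upd_upd upd_eq_self.
case: ifP => // /andP [Hne /eqP Hc]; exfalso; move/eqP: E; apply.
by rewrite Hc upd_upd upd_id.
Qed.


Lemma updE (s : config) x j v a k :
  upd s x j v (a, k) = if (a == x) && (k == j) then v else s (a, k).
Proof. by rewrite /upd ffunE. Qed.

Lemma nbr3 (x n m y : vertex) : adj x n -> adj x m -> adj x y -> n != m -> (y == n) || (y == m).
Proof.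
move=> A B C Hnm.
have Hnm' : nat_of_ord n <> nat_of_ord m.
  by move=> E; move/eqP: Hnm; apply; apply: val_inj.
move: A B C; rewrite /adj => /orP[/eqP H1|/eqP H1] /orP[/eqP H2|/eqP H2] /orP[/eqP H3|/eqP H3].
all: first [ (apply/orP; left; apply/eqP; apply: val_inj => /=; lia)
           | (apply/orP; right; apply/eqP; apply: val_inj => /=; lia) | (exfalso; lia) ].
Qed.

Lemma sigma_ex (c c' : config) x y : sim c c' -> adj x y -> c (x, i) = c (y, i) ->
  exists sg : {perm 'I_q}, forall n, (n == x) || adj x n -> sg (c (n, i)) = c' (n, i).
Proof.
move=> Hs Hxy Hc.
have Hc' : c' (x, i) = c' (y, i).
  by apply/eqP; rewrite -(sim_feat i Hs Hxy) Hc.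
have : {in [seq n <- enum vertex | (n == x) || adj x n] &, forall n m,
   ((fun n => c (n, i)) n == (fun n => c (n, i)) m) = ((fun n => c' (n, i)) n == (fun n => c' (n, i)) m)}.
  move=> n m /=; rewrite !mem_filter => /andP [Hn _] /andP [Hm _].
  case/orP: Hn => [/eqP En|Hn].
    subst n; case/orP: Hm => [/eqP Em|Hm]; first by subst m; rewrite !eqxx.
    exact: sim_feat.
  case/orP: Hm => [/eqP Em|Hm].
    subst m; rewrite eq_sym [in RHS]eq_sym; exact: sim_feat.
  case: (eqVneq n m) => [->|Hnm]; first by rewrite !eqxx.
  case/orP: (nbr3 Hn Hm Hxy Hnm) => /eqP E; subst y.
    rewrite -Hc -Hc'; exact: sim_feat.
  rewrite -Hc -Hc' eq_sym [in RHS]eq_sym; exact: sim_feat.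
move/perm_ext => [sg Hsg].
exists sg => n Hn; apply: Hsg; by rewrite mem_filter Hn mem_enum.
Qed.

Lemma sim_upd_ne (c c' : config) x j v : sim c c' -> j != i -> sim (upd c x j v) (upd c' x j v).
Proof.
move=> /simP [H1 H2] Hj; apply/simP; split.
  by move=> a k Hk; rewrite !updE; case: ifP => // _; rewrite H1.
move=> a b Hab; rewrite !updE ![i == j]eq_sym (negbTE Hj) !andbF; exact: H2.
Qed.

Lemma sim_upd_i (c c' : config) x v (sg : {perm 'I_q}) : sim c c' ->
  (forall n, (n == x) || adj x n -> sg (c (n, i)) = c' (n, i)) ->
  sim (upd c x i v) (upd c' x i (sg v)).
Proof.
move=> Hs Hsg; have /simP [H1 H2] := Hs; apply/simP; split.
  by move=> a k Hk; rewrite !updE (negbTE Hk) !andbF; exact: H1.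
move=> a b Hab; rewrite !updE !eqxx !andbT.
case: (eqVneq a x) => [Ea|Ea]; case: (eqVneq b x) => [Eb|Eb].
- by exfalso; move: (adj_neq Hab); rewrite Ea Eb eqxx.
- subst a; rewrite -(Hsg b) ?Hab ?orbT // (inj_eq perm_inj) //.
- subst b; rewrite -(Hsg a) ?(adj_sym x a) ?Hab ?orbT // (inj_eq perm_inj) //.
- exact: H2.
Qed.


Lemma rate_sum_sim (P : pred config) (c c' : config) :
  (forall r r', sim r r' -> P r = P r') -> sim c c' ->
  Rsum (fun r => if P r then rate r c else 0) = Rsum (fun r => if P r then rate r c' else 0).
Proof.
move=> HP Hs.
have E : forall d, Rsum (fun r => if P r then rate r d else 0) =
   Rsum (fun xy : vertex * vertex => if adj xy.1 xy.2 then Rsum (fun j : feature F =>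
     Rsum (fun r : config => if (r (xy.1, j) != r (xy.2, j)) && (d == upd r xy.1 j (r (xy.2, j)))
        then (if P r then wt r xy.1 xy.2 else 0) else 0)) else 0).
  move=> d.
  rewrite (Rsum_ext (g := fun r : config => Rsum (fun xy : vertex * vertex => if adj xy.1 xy.2 then
     Rsum (fun j : feature F => if (r (xy.1, j) != r (xy.2, j)) && (d == upd r xy.1 j (r (xy.2, j)))
        then (if P r then wt r xy.1 xy.2 else 0) else 0) else 0))).
    rewrite Rsum_swap; apply: Rsum_ext => xy; rewrite Rsum_if; case: ifP => // _.
    by rewrite Rsum_swap.
  move=> r; case: (P r); first by rewrite rateE.
  rewrite (Rsum_ext (g := fun _ => 0)) ?Rsum_zero // => xy; case: ifP => // _.
  by rewrite (Rsum_ext (g := fun _ => 0)) ?Rsum_zero // => j; case: ifP.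
rewrite !E; apply: Rsum_ext => [[x y]] /=; case: ifP => // Hadj.
apply: Rsum_ext => j.
rewrite (Lconv c j (fun r => if P r then wt r x y else 0) (adj_neq Hadj)).
rewrite (Lconv c' j (fun r => if P r then wt r x y else 0) (adj_neq Hadj)).
case: (boolP (c (x, j) == c (y, j))) => Hc; last first.
  have Hc' : (c' (x, j) == c' (y, j)) = false by rewrite -(sim_feat j Hs Hadj) (negbTE Hc).
  rewrite Hc'.
  rewrite (Rsum_ext (f := fun v => if _ && false then _ else 0) (g := fun _ => 0)) ?Rsum_zero;
    last by move=> v; rewrite andbF.
  rewrite (Rsum_ext (f := fun v => if _ && false then _ else 0) (g := fun _ => 0)) ?Rsum_zero //;
    by move=> v; rewrite andbF.
have Hc' : c' (x, j) == c' (y, j) by rewrite -(sim_feat j Hs Hadj).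
rewrite Hc'.
have [sg [Hy Hsim]] : exists sg : {perm 'I_q}, sg (c (y, j)) = c' (y, j) /\
     forall v, sim (upd c x j v) (upd c' x j (sg v)).
  case: (eqVneq j i) => [Ej|Ej].
    subst j; have [sg Hsg] := sigma_ex Hs Hadj (eqP Hc).
    exists sg; split; first by apply: Hsg; rewrite Hadj orbT.
    by move=> v; exact: sim_upd_i.
  exists 1%g; split.
    by rewrite perm1; have /simP [H1 _] := Hs; apply: H1.
  by move=> v; rewrite perm1; exact: sim_upd_ne.
rewrite [RHS](Rsum_reindex _ (@perm_inj _ sg)).
apply: Rsum_ext => v; rewrite -Hy (inj_eq perm_inj) !andbT.
case: (v != c (y, j)) => //.
have Hv := Hsim v; rewrite (HP _ _ Hv) /wt (sim_nagree Hv Hadj) (sim_ndiff Hv Hadj).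
done.
Qed.


Lemma gen_sum_sim (P : pred config) (c c' : config) :
  (forall r r', sim r r' -> P r = P r') -> sim c c' ->
  Rsum (fun r => if P r then gen r c else 0) = Rsum (fun r => if P r then gen r c' else 0).
Proof.
move=> HP Hs.
have E : forall d, Rsum (fun r => if P r then gen r d else 0) =
   (if P d then - exitr d else 0) + Rsum (fun r => if P r then rate r d else 0).
  move=> d; rewrite -(Rsum_pred1 (fun r => if P r then - exitr d else 0) d) -Rsum_add.
  apply: Rsum_ext => r; rewrite genE.
  by case: (P r); case: (r == d); rewrite /=; ring.
by rewrite !E (HP _ _ Hs) (exitr_sim Hs) (rate_sum_sim HP Hs).
Qed.

Lemma gen_offdiag (r c : config) : r != c -> 0 <= gen r c.
Proof. by move=> H; rewrite /gen (negbTE H); exact: rate_nn. Qed.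

End Ax.


Section Analysis.
Variables (F q N : nat) (i : feature F).
Local Notation config := (config F q N).
Variable p : R -> config -> R.
Hypothesis hp : is_law p.
Hypothesis hq : is_true (leq 2 q).

Open Scope R_scope.

Definition D (s : R) (c : config) := Rsum (fun r => p s r * gen r c).

Lemma dp s (c : config) : derivable_pt_lim (fun u => p u c) s (D s c).
Proof. by case: hp => _ H; apply: H. Qed.

Lemma p0_pos (c : config) : 0 < p 0 c.
Proof.
case: hp => H _; rewrite H; apply: Rinv_0_lt_compat; apply: pow_lt.
have : (2 <= q)%coq_nat by apply/leP.
move=> H2; apply: lt_0_INR; lia.
Qed.

Definition G := Rsum (fun r : config => Rsum (fun c : config => Rabs (gen r c))).
Definition nT := INR #|config|.

Lemma G_ge (r c : config) : Rabs (gen r c) <= G.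
Proof.
apply: (Rle_trans _ (Rsum (fun c0 : config => Rabs (gen r c0)))).
  by apply: (@Rsum_term_le _ (fun c0 => Rabs (gen r c0)) c) => s; apply: Rabs_pos.
apply: (@Rsum_term_le _ (fun r0 : config => Rsum (fun c0 => Rabs (gen r0 c0))) r) => s.
by apply: Rsum_nonneg => s'; apply: Rabs_pos.
Qed.

Lemma G_nn : 0 <= G.
Proof. by apply: Rsum_nonneg => r; apply: Rsum_nonneg => c; apply: Rabs_pos. Qed.

Lemma nT_nn : 0 <= nT.
Proof. exact: pos_INR. Qed.

Lemma Rsum_bound (T : finType) (f : T -> R) K : (forall s, f s <= K) -> Rsum f <= INR #|T| * K.
Proof. move=> H; rewrite -Rsum_const; exact: Rsum_le. Qed.

Definition mneg (x : R) := Rmin x 0.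

Lemma mneg_facts x : mneg x <= 0 /\ mneg x <= x /\ mneg x * x = mneg x * mneg x.
Proof.
rewrite /mneg /Rmin; case: Rle_dec => H; first by split; lra.
have := Rnot_le_lt _ _ H; split; [lra|split; [lra|ring]].
Qed.

Lemma key_neg (mc mr pr g : R) (b : bool) :
  mc <= 0 -> mr <= pr -> mr <= 0 -> (~~ b -> 0 <= g) -> (b -> mr = mc /\ mc * pr = mc * mc) ->
  2 * mc * (pr * g) <= Rabs g * (mc * mc + mr * mr).
Proof.
move=> H1 H2 H3; case: b => [_ /(_ isT) [-> H4]|/(_ isT) Hg _].
  have -> : 2 * mc * (pr * g) = 2 * (mc * pr) * g by ring.
  rewrite H4.
  have := Rle_abs g; have := Rle_abs (- g); rewrite Rabs_Ropp => A B.
  have := Rle_0_sqr mc; rewrite /Rsqr => C. nra.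
rewrite Rabs_right; last lra.
have : mc * pr <= mc * mr by nra.
have := Rle_0_sqr (mc - mr); rewrite /Rsqr => C. nra.
Qed.

Lemma p_nonneg t (c : config) : 0 <= t -> 0 <= p t c.
Proof.
move=> Ht.
pose E := fun s => Rsum (fun c => mneg (p s c) * mneg (p s c)).
pose E' := fun s => Rsum (fun c => 2 * mneg (p s c) * D s c).
have HE : forall s, derivable_pt_lim E s (E' s).
  move=> s; apply: dRsum => c0.
  have := derivable_pt_lim_comp (fun u => p u c0) (fun u => Rmin u 0 * Rmin u 0) s _ _ (dp s c0) (dnegsq (p s c0)).
  by rewrite Rmult_comm.
have Hb : forall s, 0 <= s -> E' s <= (2 * G * nT * nT) * E s.
  move=> s _.
  have HEt : forall c0, mneg (p s c0) * mneg (p s c0) <= E s.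
    move=> c0; apply: (@Rsum_term_le _ (fun c => mneg (p s c) * mneg (p s c)) c0) => c1.
    exact: Rle_0_sqr.
  have HE0 : 0 <= E s by apply: Rsum_nonneg => c1; exact: Rle_0_sqr.
  rewrite /E'.
  apply: (Rle_trans _ (Rsum (fun c0 : config => Rsum (fun r : config => G * (2 * E s))))).
    apply: Rsum_le => c0; rewrite /D -Rsum_scal; apply: Rsum_le => r.
    have [A1 [A2 A3]] := mneg_facts (p s c0).
    have [B1 [B2 B3]] := mneg_facts (p s r).
    apply: (Rle_trans _ (Rabs (gen r c0) * (mneg (p s c0) * mneg (p s c0) + mneg (p s r) * mneg (p s r)))).
      apply: (key_neg (b := r == c0)) => //.
        by move=> H; apply: gen_offdiag.
      by move/eqP => ->; split.
    apply: Rmult_le_compat; [exact: Rabs_pos| |exact: G_ge|].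
      by have := Rle_0_sqr (mneg (p s c0)); have := Rle_0_sqr (mneg (p s r)); rewrite /Rsqr; lra.
    by have := HEt c0; have := HEt r; lra.
  rewrite !Rsum_const -/nT.
  have := G_nn; have := nT_nn; move=> H1 H2.
  have -> : nT * (nT * (G * (2 * E s))) = 2 * G * nT * nT * E s by ring.
  lra.
have H0 : E 0 = 0.
  rewrite /E (Rsum_ext (g := fun _ => 0)) ?Rsum_zero // => c0.
  have Hp := p0_pos c0; rewrite /mneg /Rmin; case: Rle_dec => H; [lra|ring].
have Hnn : forall s, 0 <= s -> 0 <= E s.
  by move=> s _; apply: Rsum_nonneg => c1; exact: Rle_0_sqr.
have := @gronwall E E' _ t HE Hb H0 Hnn Ht.
move=> HEt.
have : mneg (p t c) * mneg (p t c) <= 0.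
  rewrite -HEt; apply: (@Rsum_term_le _ (fun c => mneg (p t c) * mneg (p t c)) c) => c1.
  exact: Rle_0_sqr.
rewrite /mneg /Rmin; case: Rle_dec => H; last by move=> _; have := Rnot_le_lt _ _ H; lra.
move=> H1; have := Rle_0_sqr (p t c); rewrite /Rsqr => H2.
have : p t c * p t c = 0 by lra.
case/Rmult_integral => ->; lra.
Qed.


Lemma p_pos t (c : config) : 0 <= t -> 0 < p t c.
Proof.
move=> Ht.
pose lam := exitr c.
pose f := fun s => p s c * exp (lam * s).
pose f' := fun s => D s c * exp (lam * s) + p s c * (exp (lam * s) * (lam * 1)).
have Hf : forall s, derivable_pt_lim f s (f' s).
  move=> s; apply: derivable_pt_lim_mult; first exact: dp.
  have -> : (fun s => exp (lam * s)) = comp exp (fun s => lam * s) by [].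
  apply: derivable_pt_lim_comp; last exact: derivable_pt_lim_exp.
  apply: derivable_pt_lim_scal; exact: derivable_pt_lim_id.
have Hpos : forall s, 0 <= s -> 0 <= f' s.
  move=> s Hs; rewrite /f'.
  have -> : D s c * exp (lam * s) + p s c * (exp (lam * s) * (lam * 1)) =
            (D s c + lam * p s c) * exp (lam * s) by ring.
  apply: Rmult_le_pos; last by apply: Rlt_le; apply: exp_pos.
  have Hcc : gen c c = - lam by rewrite /gen eqxx.
  rewrite /D (Rsum_D1 _ c) Hcc.
  set X := Rsum _.
  have : 0 <= X.
    rewrite /X; apply: Rsum_nonneg => r; case: eqP => Hr; first lra.
    apply: Rmult_le_pos; first exact: p_nonneg.
    by apply: gen_offdiag; apply/eqP.
  lra.
have := @mono0 f f' t Hf Hpos Ht.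
rewrite /f Rmult_0_r exp_0 Rmult_1_r => H.
have := p0_pos c; have := exp_pos (lam * t) => He Hp0.
have : 0 < p t c * exp (lam * t) by lra.
move=> H2; case: (Rlt_le_dec 0 (p t c)) => // H3.
have : p t c * exp (lam * t) <= 0 by nra.
lra.
Qed.


Lemma Rsum_sub (T : finType) (f g : T -> R) : Rsum (fun s => f s - g s) = Rsum f - Rsum g.
Proof.
rewrite /Rminus -(Rsum_ext (f := fun s => f s + (-1) * g s)); last by move=> s; ring.
by rewrite Rsum_add Rsum_scal; ring.
Qed.

Definition rho (r : config) : config := odflt r [pick r' | sim i r r'].

Lemma rho_sim r : sim i r (rho r).
Proof. by rewrite /rho; case: pickP => [r' H|H] //=; have := H r; rewrite sim_refl. Qed.

Lemma rho_eq r r' : sim i r r' -> rho r = rho r'.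
Proof.
move=> Hrr'; rewrite /rho (@eq_pick _ _ (fun x => sim i r' x)).
  by case: pickP => //= H; have := H r'; rewrite sim_refl.
move=> x /=; apply/idP/idP => H.
  exact: sim_trans (sim_sym Hrr') H.
exact: sim_trans Hrr' H.
Qed.

Lemma Ddiff s (c c' : config) : sim i c c' ->
  D s c - D s c' = Rsum (fun r => (p s r - p s (rho r)) * (gen r c - gen r c')).
Proof.
move=> Hs.
have -> : D s c - D s c' = Rsum (fun r => p s r * (gen r c - gen r c')).
  by rewrite /D -Rsum_sub; apply: Rsum_ext => r; ring.
rewrite (Rsum_ext (f := fun r => (p s r - p s (rho r)) * _)
   (g := fun r => p s r * (gen r c - gen r c') - p s (rho r) * (gen r c - gen r c')));
  last by move=> r; ring.
rewrite Rsum_sub.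
have -> : Rsum (fun r => p s (rho r) * (gen r c - gen r c')) = 0; last by ring.
rewrite (Rsum_ext (g := fun r => Rsum (fun r0 => if r0 == rho r then p s r0 * (gen r c - gen r c') else 0))); last first.
  by move=> r; rewrite (Rsum_pred1 (fun r0 => p s r0 * (gen r c - gen r c')) (rho r)).
rewrite Rsum_swap (Rsum_ext (g := fun _ => 0)) ?Rsum_zero // => r0.
rewrite (Rsum_ext (g := fun r => p s r0 * ((if r0 == rho r then gen r c else 0) - (if r0 == rho r then gen r c' else 0)))); last first.
  by move=> r; case: (r0 == rho r); ring.
rewrite Rsum_scal Rsum_sub.
rewrite (@gen_sum_sim _ _ _ i (fun r => r0 == rho r) c c'); first by ring.
  by move=> r r' Hrr'; rewrite (rho_eq Hrr').
done.
Qed.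


Lemma key_inv (d e h : R) : 2 * d * (e * h) <= Rabs h * (d * d + e * e).
Proof.
have H1 : Rabs (2 * d * e) <= d * d + e * e.
  have := Rle_0_sqr (d - e); have := Rle_0_sqr (d + e); rewrite /Rsqr => A B.
  apply: Rabs_le; split; nra.
have -> : 2 * d * (e * h) = (2 * d * e) * h by ring.
apply: (Rle_trans _ _ _ (Rle_abs _)); rewrite Rabs_mult Rmult_comm.
apply: Rmult_le_compat_l => //; exact: Rabs_pos.
Qed.

Lemma p_inv t (c c' : config) : 0 <= t -> sim i c c' -> p t c = p t c'.
Proof.
move=> Ht Hcc.
pose U := fun s => Rsum (fun c : config => Rsum (fun c' : config =>
   if sim i c c' then (p s c - p s c') * (p s c - p s c') else 0)).
pose U' := fun s => Rsum (fun c : config => Rsum (fun c' : config =>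
   if sim i c c' then (D s c - D s c') * (p s c - p s c') + (p s c - p s c') * (D s c - D s c') else 0)).
have HU : forall s, derivable_pt_lim U s (U' s).
  move=> s; apply: dRsum => c1; apply: dRsum => c2.
  case: (sim i c1 c2) => /=; last exact: derivable_pt_lim_const.
  have H := derivable_pt_lim_minus _ _ s _ _ (dp s c1) (dp s c2).
  exact: (derivable_pt_lim_mult _ _ s _ _ H H).
have HUt : forall s c1 c2, sim i c1 c2 -> (p s c1 - p s c2) * (p s c1 - p s c2) <= U s.
  move=> s c1 c2 H12.
  apply: (Rle_trans _ (Rsum (fun c' : config =>
     if sim i c1 c' then (p s c1 - p s c') * (p s c1 - p s c') else 0))).
    have := @Rsum_term_le _ (fun c' : config =>
     if sim i c1 c' then (p s c1 - p s c') * (p s c1 - p s c') else 0) c2.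
    rewrite H12; apply => r; case: ifP => _; [exact: Rle_0_sqr| lra].
  apply: (@Rsum_term_le _ (fun c : config => Rsum (fun c' : config =>
   if sim i c c' then (p s c - p s c') * (p s c - p s c') else 0)) c1) => c3.
  apply: Rsum_nonneg => r; case: ifP => _; [exact: Rle_0_sqr| lra].
have HU0 : forall s, 0 <= U s.
  move=> s; apply: Rsum_nonneg => c1; apply: Rsum_nonneg => c2.
  case: ifP => _; [exact: Rle_0_sqr| lra].
have Hb : forall s, 0 <= s -> U' s <= (4 * G * nT * nT * nT) * U s.
  move=> s _.
  apply: (Rle_trans _ (Rsum (fun c1 : config => Rsum (fun c2 : config => nT * (4 * G * U s))))).
    apply: Rsum_le => c1; apply: Rsum_le => c2.
    case: (boolP (sim i c1 c2)) => H12; last first.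
      have := G_nn; have := nT_nn; have := HU0 s => *.
      apply: Rmult_le_pos => //; nra.
    have -> : (D s c1 - D s c2) * (p s c1 - p s c2) + (p s c1 - p s c2) * (D s c1 - D s c2)
      = 2 * (p s c1 - p s c2) * (D s c1 - D s c2) by ring.
    rewrite (Ddiff s H12) -Rsum_scal -Rsum_const.
    apply: Rsum_le => r.
    have Hrr := rho_sim r.
    have := HUt s _ _ Hrr; have := HUt s _ _ H12.
    have := G_ge r c1; have := G_ge r c2.
    have := Rabs_triang (gen r c1) (- gen r c2); rewrite Rabs_Ropp.
    have := key_inv (p s c1 - p s c2) (p s r - p s (rho r)) (gen r c1 - gen r c2).
    have := Rabs_pos (gen r c1 - gen r c2).
    move=> A B C E1 E2 E3 E4.
    rewrite /Rminus in A B C E1 E2 E3 E4 *.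
    apply: (Rle_trans _ _ _ B).
    apply: (Rle_trans _ (2 * G * (U s + U s))).
      apply: Rmult_le_compat; [exact: A| |lra|lra].
      by apply: Rplus_le_le_0_compat; exact: Rle_0_sqr.
    lra.
  rewrite !Rsum_const -/nT.
  have -> : nT * (nT * (nT * (4 * G * U s))) = 4 * G * nT * nT * nT * U s by ring.
  lra.
have H0 : U 0 = 0.
  rewrite /U (Rsum_ext (g := fun _ => 0)) ?Rsum_zero // => c1.
  rewrite (Rsum_ext (g := fun _ => 0)) ?Rsum_zero // => c2.
  case: hp => Hi _; rewrite !Hi; case: ifP => _; ring.
have := @gronwall U U' _ t HU Hb H0 (fun s _ => HU0 s) Ht.
move=> HUz; have := HUt t _ _ Hcc; rewrite HUz => H.
have := Rle_0_sqr (p t c - p t c'); rewrite /Rsqr => H'.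
have : (p t c - p t c') * (p t c - p t c') = 0 by lra.
case/Rmult_integral => H2; lra.
Qed.

End Analysis.


Section Final.
Variables (F q N : nat) (i : feature F).
Local Notation config := (config F q N).
Local Notation vertex := (vertex N).
Variables (x y z : vertex).
Hypothesis hxy : is_true (leq (S x) y).
Hypothesis hyz : is_true (leq (S y) z).

Definition Phi (d : 'I_q) (c : config) : config :=
  [ffun pr : vertex * feature F => if (pr.2 == i) && (leq (S y) pr.1) then tperm (c (x, i)) d (c pr) else c pr].

Lemma Phi_x d (c : config) k : Phi d c (x, k) = c (x, k).
Proof.
rewrite /Phi ffunE /=; case: ifP => //; move/andP => [_ H].
by exfalso; move: H hxy; rewrite ltnNge => /negP H1 /ltnW H2; apply: H1.
Qed.

Lemma Phi_y d (c : config) k : Phi d c (y, k) = c (y, k).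
Proof. by rewrite /Phi ffunE /= ltnn andbF. Qed.

Lemma Phi_z d (c : config) : Phi d c (z, i) = tperm (c (x, i)) d (c (z, i)).
Proof. by rewrite /Phi ffunE /= eqxx hyz. Qed.

Lemma Phi_inv d (c : config) : Phi d (Phi d c) = c.
Proof.
apply/ffunP => pr; rewrite {1}/Phi ffunE Phi_x /Phi ffunE.
by case: ifP => H; rewrite H ?tpermK.
Qed.

Lemma adj_cross (v w : vertex) : adj v w -> leq (S y) v -> ~~ leq (S y) w -> w = y.
Proof.
rewrite -leqNgt => /orP [] /eqP H /ltP Hv /leP Hw; apply: val_inj => /=; lia.
Qed.

Lemma Phi_sim d (c : config) : c (y, i) != c (x, i) -> c (y, i) != d -> sim i c (Phi d c).
Proof.
move=> H1 H2; apply/simP; split.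
  by move=> a k Hk; rewrite /Phi ffunE /= (negbTE Hk).
have Hfix : tperm (c (x, i)) d (c (y, i)) = c (y, i).
  by apply: tpermD; rewrite eq_sym.
move=> v w Hvw; rewrite /Phi !ffunE /= eqxx /=.
case: (boolP (leq (S y) v)) => Hv; case: (boolP (leq (S y) w)) => Hw.
- by rewrite (inj_eq perm_inj).
- by rewrite (adj_cross Hvw Hv Hw) -[in RHS]Hfix (inj_eq perm_inj).
- by rewrite adj_sym in Hvw; rewrite (adj_cross Hvw Hw Hv) -[in RHS]Hfix (inj_eq perm_inj).
- done.
Qed.


Variable p : R -> config -> R.
Hypothesis hp : is_law p.
Hypothesis hq : is_true (leq 2 q).

Open Scope R_scope.

Definition Bp (c : config) : bool := ~~ ((c (x, i) == c (y, i)) || (c (y, i) == c (z, i))).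
Definition ABp (c : config) : bool := (c (x, i) == c (z, i)) && Bp c.

Lemma count_main t : 0 <= t ->
  Rsum (fun c => if Bp c then p t c else 0) = (INR q - 1) * Rsum (fun c => if ABp c then p t c else 0).
Proof.
move=> Ht.
rewrite (Rsum_ext (g := fun c : config => Rsum (fun d : 'I_q =>
   if d == c (z, i) then (if Bp c then p t c else 0) else 0))); last first.
  by move=> c; rewrite (Rsum_pred1 (fun _ : 'I_q => if Bp c then p t c else 0)).
rewrite Rsum_swap.
rewrite (Rsum_ext (g := fun d : 'I_q => Rsum (fun c : config =>
   if ABp c && (c (y, i) != d) then p t c else 0))); last first.
  move=> d; rewrite (Rsum_reindex _ (can_inj (Phi_inv d))).
  apply: Rsum_ext => c; rewrite Phi_z /Bp !Phi_x !Phi_y Phi_z /ABp /Bp.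
  case: (eqVneq (c (z, i)) (c (x, i))) => Hz.
    rewrite Hz tpermL eqxx /= [c (y, i) == c (x, i)]eq_sym orbb negb_or.
    case: (eqVneq (c (x, i)) (c (y, i))) => //= Hab.
    case: (eqVneq (c (y, i)) d) => //= Hd.
    apply: esym; apply: (p_inv hp Ht); apply: Phi_sim => //.
    by rewrite eq_sym.
  have -> : (d == tperm (c (x, i)) d (c (z, i))) = false.
    apply/negbTE; rewrite -[X in X == _](tpermL (c (x, i)) d) eq_sym (inj_eq perm_inj).
    by rewrite Hz.
  done.
rewrite Rsum_swap -Rsum_scal; apply: Rsum_ext => c.
case: (ABp c) => /=; last first.
  by rewrite Rsum_zero; ring.
rewrite (Rsum_ext (g := fun d : 'I_q => p t c - (if d == c (y, i) then p t c else 0))); last first.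
  by move=> d; rewrite eq_sym; case: (d == c (y, i)) => /=; ring.
rewrite Rsum_sub Rsum_const card_ord (Rsum_pred1 (fun _ : 'I_q => p t c)); ring.
Qed.

End Final.

Close Scope R_scope.
Theorem lemma9 (F q N : nat) (hq : (2 <= q)%N)
    (p : R -> config F q N -> R) (hp : is_law p)
    (t : R) (ht : (0 <= t)%R)
    (x y z : 'I_N.+1) (hxy : (x < y)%N) (hyz : (y < z)%N) (i : 'I_F) :
  cond_prob p t (Omega i x z)
    (predC (predU (Omega i x y) (Omega i y z))) = (/ (INR q - 1))%R.
Proof.
rewrite /cond_prob /prob.
have -> : Rsum (fun c => if predI (Omega i x z) (predC (predU (Omega i x y) (Omega i y z))) c
                         then p t c else 0%R) = Rsum (fun c => if ABp i x y z c then p t c else 0%R).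
  by apply: Rsum_ext.
have -> : Rsum (fun c => if predC (predU (Omega i x y) (Omega i y z)) c
                         then p t c else 0%R) = Rsum (fun c => if Bp i x y z c then p t c else 0%R).
  by apply: Rsum_ext.
rewrite (count_main i hxy hyz hp ht).
have Hq : (1 < INR q)%R.
  have : (2 <= q)%coq_nat by apply/leP.
  move=> H; apply: (Rlt_le_trans _ (INR 2)); first by simpl; lra.
  by apply: le_INR.
pose o0 := @Ordinal q 0 (leq_trans (isT : 0 < 2) hq).
pose o1 := @Ordinal q 1 hq.
pose c0 := [ffun pr : vertex N * feature F => if pr.1 == y then o1 else o0].
have Hxy : (x == y) = false by apply/eqP => E; move: hxy; rewrite E ltnn.
have Hzy : (z == y) = false by apply/eqP => E; move: hyz; rewrite E ltnn.
have HB0 : Bp i x y z c0.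
  by rewrite /Bp /c0 !ffunE /= Hxy Hzy eqxx.
set PAB := Rsum _.
have HPB : (0 < (INR q - 1) * PAB)%R.
  rewrite -(count_main i hxy hyz hp ht).
  apply: (Rlt_le_trans _ (if Bp i x y z c0 then p t c0 else 0%R)).
    by rewrite HB0; apply: (p_pos hp hq).
  apply: (@Rsum_term_le _ (fun c => if Bp i x y z c then p t c else 0%R) c0) => c.
  case: ifP => _; [exact: (p_nonneg hp hq)|apply: Rle_refl].
have HPAB : PAB <> 0%R by move=> E; rewrite E Rmult_0_r in HPB; lra.
field; split => //; lra.
Qed.
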